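(* Let $A,B\in\mathcal{M}_n$, let $\psi\colon H^*(M(A);\mathbb{Z})\to H^*(M(B);\mathbb{Z})$ be a graded ring isomorphism (also denoting its rationalization by $\psi$), and let $\sigma$ be a permutation of $\{1,\dots,n\}$ and $q_1,\dots,q_n$ nonzero rationals with $\psi(y^A_j)=q_jy^B_{\sigma(j)}$ for all $j$. Suppose $q_j=\pm\tfrac12$ for some $j$. Then there are $i<j$ and $c\in\mathbb{Z}\setminus\{0\}$ such that $\alpha^A_j=cy^A_i$. If $\alpha^A_j$ is not of even exceptional type, then $c$ is odd and $q_i=\pm2$. If neither $\alpha^A_j$ nor $\alpha^B_{\sigma(i)}$ is of even exceptional type, then $\alpha^B_{\sigma(i)}=d\,y^B_{\sigma(j)}$ for some odd integer $d$.
   Context: Let $\mathcal{M}_n$ be the set of integral strictly upper triangular $n\times n$ matrices $A=(A^i_j)$ ($A^i_j$ is the $(i,j)$ entry, and $A^i_j=0$ for $i\ge j$). For $A\in\mathcal{M}_n$, $M(A)$ denotes the Bott manifold obtained as the quotient of $(S^3)^n$ ($S^3\subset\mathbb{C}^2$ the unit sphere) by the free $(S^1)^n$-action $(g_1,\dots,g_n)\cdot((z_1,w_1),\dots,(z_n,w_n))=\big(((\prod_{k<j}g_k^{-A^k_j})g_jz_j,\ g_jw_j)\big)_{j=1}^n$. Let $x^A_j\in H^2(M(A);\mathbb{Z})$ be the first Chern class of the line bundle obtained as the quotient of $(S^3)^n\times\mathbb{C}$ where $g$ acts on the $\mathbb{C}$-factor by $g_j^{-1}$. Put $\alpha^A_j=\sum_{i<j}A^i_jx^A_i$.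 Then $H^*(M(A);\mathbb{Z})=\mathbb{Z}[x^A_1,\dots,x^A_n]/((x^A_j)^2-\alpha^A_jx^A_j\mid j=1,\dots,n)$. Define $y^A_j=x^A_j-\tfrac12\alpha^A_j\in H^2(M(A);\mathbb{Q})$. The same notation is used for $B$. We say $\alpha^A_j$ is of exceptional type if $\alpha^A_j=cy^A_i$ for some nonzero integer $c$ and some $i<j$, and of even exceptional type if moreover this integer $c$ is even. *)

(* Defs.v *)
From HB Require Import structures.
From mathcomp Require Import all_boot all_order all_algebra all_fingroup.
From mathcomp Require Import mpoly.
Set Implicit Arguments. Unset Strict Implicit. Unset Printing Implicit Defensive.
Import Order.TTheory GRing.Theory Num.Theory.
Local Open Scope ring_scope.

(* Indices 1..n of the paper are 'I_n (0-based). A matrix A : 'M[int]_n has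
   entries A i j = A^i_j. *)

Definition strict_upper (n : nat) (A : 'M[int]_n) : Prop :=
  forall i j : 'I_n, (j <= i)%N -> A i j = 0.

(* Integral presentation H^*(M(A);Z) = Z[x_1..x_n] / I_A,
   I_A = ((x_j)^2 - alpha_j x_j | j). *)
Definition alpha_poly (n : nat) (A : 'M[int]_n) (j : 'I_n) : {mpoly int[n]} :=
  \sum_(i < n | (i < j)%N) A i j *: 'X_i.

Definition rel_poly (n : nat) (A : 'M[int]_n) (j : 'I_n) : {mpoly int[n]} :=
  'X_j ^+ 2 - alpha_poly A j * 'X_j.

Definition in_ideal (n : nat) (A : 'M[int]_n) (p : {mpoly int[n]}) : Prop :=
  exists c : 'I_n -> {mpoly int[n]}, p = \sum_(k < n) c k * rel_poly A k.

(* A graded ring homomorphism H^*(M(A);Z) -> H^*(M(B);Z) is determined by the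
   images of the degree-2 generators, which are integral linear combinations
   x^A_j |-> sum_k P j k x^B_k (H^2 is free on the x^B_k).  It is well defined
   iff the induced substitution Z[x] -> Z[x] maps I_A into I_B. *)
Definition lin_image (n : nat) (P : 'M[int]_n) (j : 'I_n) : {mpoly int[n]} :=
  \sum_(k < n) P j k *: 'X_k.

Definition subst_poly (n : nat) (P : 'M[int]_n) (p : {mpoly int[n]}) : {mpoly int[n]} :=
  mmap (@mpolyC _ int) (lin_image P) p.

Definition graded_hom (n : nat) (A B P : 'M[int]_n) : Prop :=
  forall p : {mpoly int[n]}, in_ideal A p -> in_ideal B (subst_poly P p).

Definition graded_iso (n : nat) (A B P : 'M[int]_n) : Prop :=
  graded_hom A B P /\
  exists Q : 'M[int]_n, graded_hom B A Q /\ P *m Q = 1%:M /\ Q *m P = 1%:M.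

(* H^2(M(A);Q) = Q^n with basis x^A_1..x^A_n (row vectors of coordinates). *)
Definition xQ (n : nat) (j : 'I_n) : 'rV[rat]_n := delta_mx 0 j.

Definition alphaQ (n : nat) (A : 'M[int]_n) (j : 'I_n) : 'rV[rat]_n :=
  \sum_(i < n | (i < j)%N) (A i j)%:~R *: xQ i.

Definition yQ (n : nat) (A : 'M[int]_n) (j : 'I_n) : 'rV[rat]_n :=
  xQ j - (1 / 2 : rat) *: alphaQ A j.

Definition psiQ (n : nat) (P : 'M[int]_n) (v : 'rV[rat]_n) : 'rV[rat]_n :=
  v *m map_mx (fun z : int => z%:~R : rat) P.

Definition even_exceptional (n : nat) (A : 'M[int]_n) (j : 'I_n) : Prop :=
  exists (i : 'I_n) (c : int),
    (i < j)%N /\ c != 0 /\ alphaQ A j = c%:~R *: yQ A i /\ (2 %| c)%Z.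

(* Main.v *)
Require Import Defs.
From HB Require Import structures.
From mathcomp Require Import all_boot all_order all_algebra all_fingroup.
From mathcomp Require Import mpoly.
From mathcomp Require Import ring lra zify.
Import Order.TTheory GRing.Theory Num.Theory.
Set Implicit Arguments. Unset Strict Implicit. Unset Printing Implicit Defensive.
Local Open Scope ring_scope.

Lemma xQ_E n (j p : 'I_n) : xQ j 0 p = (p == j)%:R.
Proof. by rewrite /xQ mxE eqxx. Qed.

Lemma alphaQ_E n (A : 'M[int]_n) j p :
  alphaQ A j 0 p = if (p < j)%N then (A p j)%:~R else 0.
Proof.
rewrite /alphaQ summxE big_mkcond (bigD1 p) //= big1 ?addr0.
  by case: ifP => _; rewrite ?mxE ?xQ_E ?eqxx ?mulr1.
move=> i ip; case: ifP => _ //; rewrite mxE xQ_E.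
by rewrite eq_sym (negbTE ip) mulr0.
Qed.

Lemma yQ_E n (A : 'M[int]_n) j p :
  yQ A j 0 p = (p == j)%:R - 1/2 * (if (p < j)%N then (A p j)%:~R else 0).
Proof. by rewrite /yQ !mxE -alphaQ_E eqxx. Qed.

Lemma psiQ_E n (P : 'M[int]_n) v p :
  psiQ P v 0 p = \sum_i v 0 i * (P i p)%:~R.
Proof. by rewrite /psiQ mxE; apply: eq_bigr => i _; rewrite mxE. Qed.
Definition gg : {poly {poly rat}} := 'X.
Definition kk : {poly {poly rat}} := ('X)%:P.
Definition cc (r : rat) : {poly {poly rat}} := r%:P%:P.
Definition hh (c : rat) := kk + cc c * gg.
Definition cf (p : {poly {poly rat}}) : rat := (p`_1)`_1.
Definition inJ p := exists p1 p2, p = gg^+2 * p1 + kk^+2 * p2.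
Lemma cfD p q : cf (p + q) = cf p + cf q.
Proof. by rewrite /cf !coefD. Qed.
Lemma cfB p q : cf (p - q) = cf p - cf q.
Proof. by rewrite /cf !coefB. Qed.

Lemma cfJ p : inJ p -> cf p = 0.
Proof.
case=> p1 [p2 ->]; rewrite cfD /cf /gg /kk -rmorphXn /= coefXnM coefCM coefXnM /=.
by rewrite coef0 add0r.
Qed.

Lemma inJD p q : inJ p -> inJ q -> inJ (p + q).
Proof. by case=> a [b ->] [c [d ->]]; exists (a + c), (b + d); ring. Qed.
Lemma inJM c p : inJ p -> inJ (c * p).
Proof. by case=> a [b ->]; exists (c * a), (c * b); ring. Qed.
Lemma inJ0 : inJ 0.
Proof. by exists 0, 0; ring. Qed.

Lemma cc_rm : forall x y, cc (x * y) = cc x * cc y.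
Proof. by move=> x y; rewrite /cc !rmorphM. Qed.

Lemma expand r1 r2 s1 s2 c :
  cf ((cc r1 * hh c + cc r2 * gg) * (cc s1 * hh c + cc s2 * gg))
  = 2 * c * r1 * s1 + r1 * s2 + r2 * s1.
Proof.
have -> : (cc r1 * hh c + cc r2 * gg) * (cc s1 * hh c + cc s2 * gg) =
   gg ^+ 2 * cc (r1 * s1 * c^+2 + (r1 * s2 + r2 * s1) * c + r2 * s2)
   + kk ^+ 2 * cc (r1 * s1) + cc (2 * c * r1 * s1 + r1 * s2 + r2 * s1) * (gg * kk).
  rewrite /hh /cc. ring.
rewrite cfD cfJ; last by exists (cc (r1 * s1 * c^+2 + (r1 * s2 + r2 * s1) * c + r2 * s2)), (cc (r1 * s1)); ring.
rewrite add0r /cf /cc /gg /kk mulrA mulrC mulrA -rmorphM /= coefMX /= coefC /= mulrC coefMX coefC /=.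
done.
Qed.

Lemma cc_int (z : int) : (z%:~R : {poly {poly rat}}) = cc z%:~R.
Proof. by rewrite /cc !rmorph_int. Qed.

Lemma ringF n (A B P : 'M[int]_n) (hom : graded_hom A B P) (k t m : 'I_n)
  (hmt : (m < t)%N) :
  let U := psiQ P (xQ k) in let V := psiQ P (alphaQ A k) in
  let b := (B m t)%:~R : rat in
  b * U 0 t * U 0 t + U 0 t * U 0 m + U 0 m * U 0 t =
  b * V 0 t * U 0 t + V 0 t * U 0 m + V 0 m * U 0 t.
Proof.
move=> U V b.
have hI : in_ideal A (rel_poly A k).
  exists (fun l => if l == k then 1 else 0).
  rewrite (bigD1 k) //= eqxx mul1r big1 ?addr0 // => i /negbTE ->; by rewrite mul0r.
have [cB hcB] := hom _ hI.
pose X : 'I_n -> {poly {poly rat}} :=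
  fun l => if l == m then gg else if l == t then hh (b / 2) else 0.
pose phi := mmap (intr : int -> {poly {poly rat}}) X.
have ci (f : {rmorphism int -> {poly {poly rat}}}) z : f z = cc z%:~R.
  by rewrite -{1}[z]intz rmorph_int /cc !rmorph_int.
have phiB : {morph phi : x y / x - y} by move=> x y; rewrite /phi rmorphB.
have phiD : {morph phi : x y / x + y} by move=> x y; rewrite /phi rmorphD.
have phiM : {morph phi : x y / x * y} by move=> x y; rewrite /phi rmorphM.
have phi0 : phi 0 = 0 by rewrite /phi rmorph0.
have phiXn x : phi (x ^+ 2) = phi x ^+ 2 by rewrite /phi rmorphXn.
have phiZ z x : phi (z *: x) = cc z%:~R * phi x by rewrite /phi mmapZ ci.
have phiS (I : finType) (Pr : pred I) F : phi (\sum_(i | Pr i) F i) = \sum_(i | Pr i) phi (F i).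
  by rewrite /phi raddf_sum.
have phiX l : phi 'X_l = X l by rewrite /phi mmapX mmap1U.
have phiL (w : 'I_n -> int) : phi (\sum_l w l *: 'X_l) =
    cc (w t)%:~R * hh (b/2) + cc (w m)%:~R * gg.
  rewrite /phi raddf_sum /= (bigD1 m) //= (bigD1 t) /=; last by rewrite -(inj_eq val_inj) /= gtn_eqF.
  rewrite big1 ?addr0; last first.
    move=> l /andP[lm lt]; rewrite /phi mmapZ mmapX mmap1U /X.
    by rewrite (negbTE lm) (negbTE lt) mulr0.
  have tm : (t == m) = false.
    by apply/negbTE; rewrite -(inj_eq val_inj) /= gtn_eqF.
  rewrite !mmapZ !mmapX !mmap1U /X eqxx tm eqxx. rewrite !ci.
  by rewrite addrC.
have phiJ l : inJ (phi (rel_poly B l)).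
  rewrite /rel_poly phiB phiXn phiM phiX /alpha_poly phiS.
  under eq_bigr do rewrite phiZ phiX.
  rewrite /X; case: eqP => [->|lm].
    rewrite big1; first by exists 1, 0; ring.
    move=> i im; have -> : (i == m) = false by rewrite -(inj_eq val_inj) /= ltn_eqF.
    have -> : (i == t) = false.
      by rewrite -(inj_eq val_inj) /= ltn_eqF // (ltn_trans im hmt).
    by rewrite mulr0.
  case: eqP => [->|lt].
    rewrite (bigD1 m) //= eqxx big1 ?addr0; last first.
      move=> i /andP[it im]; rewrite (negbTE im).
      have -> : (i == t) = false by rewrite -(inj_eq val_inj) /= ltn_eqF.
      by rewrite mulr0.
    exists (- (cc (b/2))^+2), 1.
    have hb : cc b = 2 * cc (b/2).
      have e : b = 2 * (b/2) by field.
      by rewrite {1}e /cc !rmorphM /= !rmorph_nat.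
    rewrite /hh hb; ring.
  by exists 0, 0; rewrite mulr0 expr2 mulr0 subr0; ring.
have hR : inJ (phi (subst_poly P (rel_poly A k))).
  rewrite hcB phiS; elim/big_ind: _ => [|x y|i _]; first exact: inJ0.
    exact: inJD.
  by rewrite phiM; apply: inJM.
have hsub : subst_poly P (rel_poly A k) = lin_image P k ^+ 2 -
   (\sum_(i < n | (i < k)%N) A i k *: lin_image P i) * lin_image P k.
  rewrite /subst_poly /rel_poly rmorphB rmorphXn rmorphM /= mmapX mmap1U.
  rewrite /alpha_poly raddf_sum /=.
  by under eq_bigr do rewrite mmapZ mmapX mmap1U mul_mpolyC.
have hU p : U 0 p = (P k p)%:~R.
  rewrite /U psiQ_E (bigD1 k) //= xQ_E eqxx mul1r big1 ?addr0 //.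
  by move=> i /negbTE ik; rewrite xQ_E ik mul0r.
have hV : \sum_(i < n | (i < k)%N) cc (A i k)%:~R *
     (cc (P i t)%:~R * hh (b/2) + cc (P i m)%:~R * gg)
   = cc (V 0 t) * hh (b/2) + cc (V 0 m) * gg.
  rewrite /V !psiQ_E.
  under eq_bigr do rewrite mulrDr !mulrA -!cc_rm.
  rewrite big_split /= -!mulr_suml.
  congr (_ * _ + _ * _); rewrite /cc -!rmorph_sum; congr (_%:P%:P);
    rewrite big_mkcond; apply: eq_bigr => i _; rewrite alphaQ_E;
    by case: ifP => _ //; rewrite mul0r.
have phiLin i : phi (lin_image P i) = cc (P i t)%:~R * hh (b / 2) + cc (P i m)%:~R * gg.
  exact: (phiL (fun l => P i l)).
have := cfJ hR.
rewrite hsub phiB phiXn phiM phiLin phiS.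
under eq_bigr do rewrite phiZ phiLin.
rewrite hV cfB expr2 !expand !hU => h.
apply/eqP; rewrite -subr_eq0; apply/eqP; rewrite -h; by field.
Qed.

Lemma top_index n (v : 'rV[rat]_n) (s : 'I_n) : v 0 s != 0 ->
  exists t : 'I_n, [/\ (s <= t)%N, v 0 t != 0 &
     forall p : 'I_n, (t < p)%N -> v 0 p = 0].
Proof.
move=> hs.
case: (@arg_maxnP _ s (fun i => v 0 i != 0) (fun i : 'I_n => nat_of_ord i) hs) => t ht hmax.
exists t; split => //; first exact: hmax.
move=> p tp; apply/eqP; apply: contraTT tp => hp.
by rewrite -leqNgt; apply: hmax.
Qed.

Lemma psiQD n (P : 'M[int]_n) u v : psiQ P (u + v) = psiQ P u + psiQ P v.
Proof. by rewrite /psiQ mulmxDl. Qed.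
Lemma psiQB n (P : 'M[int]_n) u v : psiQ P (u - v) = psiQ P u - psiQ P v.
Proof. by rewrite /psiQ mulmxBl. Qed.
Lemma psiQZ n (P : 'M[int]_n) r v : psiQ P (r *: v) = r *: psiQ P v.
Proof. by rewrite /psiQ scalemxAl. Qed.
Lemma psiQK n (P Q : 'M[int]_n) : P *m Q = 1%:M -> forall v, psiQ Q (psiQ P v) = v.
Proof.
move=> hPQ v; rewrite /psiQ -mulmxA -map_mxM hPQ.
have -> : map_mx (fun z : int => z%:~R : rat) 1%:M = 1%:M :> 'M_n.
  by apply/matrixP => i k; rewrite !mxE; case: (i == k).
by rewrite mulmx1.
Qed.

Lemma psiQ_xE n (P : 'M[int]_n) k p : psiQ P (xQ k) 0 p = (P k p)%:~R.
Proof.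
rewrite psiQ_E (bigD1 k) //= xQ_E eqxx mul1r big1 ?addr0 //.
by move=> i /negbTE ik; rewrite xQ_E ik mul0r.
Qed.

Lemma psiQ_aint n (P A : 'M[int]_n) k p : psiQ P (alphaQ A k) 0 p \is a Num.int.
Proof.
rewrite psiQ_E rpred_sum // => i _; rewrite alphaQ_E.
by case: ifP => _; rewrite ?mul0r ?rpred0 // -intrM intr_int.
Qed.

Lemma half_not_int (r : rat) : (r = 1/2 \/ r = -(1/2)) -> r \is a Num.int -> False.
Proof.
move=> hr /intrP[z hz].
have : (2 * z = 1 \/ 2 * z = -1)%R.
  case: hr => hr; [left|right]; apply: (@intr_inj rat); rewrite intrM -hz hr /=.
    by rewrite mulrC -mulrA mulVf // mulr1.
  by rewrite mulrN mulrC -mulrA mulVf // mulr1.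
lia.
Qed.

Lemma xy n (A : 'M[int]_n) k : xQ k = yQ A k + (1/2) *: alphaQ A k.
Proof. by rewrite /yQ subrK. Qed.

Lemma mxE_add n (u v : 'rV[rat]_n) p : (u + v) 0 p = u 0 p + v 0 p.
Proof. by rewrite mxE. Qed.
Lemma mxE_sub n (u v : 'rV[rat]_n) p : (u - v) 0 p = u 0 p - v 0 p.
Proof. by rewrite !mxE. Qed.
Lemma mxE_scale n r (u : 'rV[rat]_n) p : (r *: u) 0 p = r * u 0 p.
Proof. by rewrite mxE. Qed.

Lemma hyx n (A B P : 'M[int]_n) (sigma : 'S_n) (q : 'I_n -> rat)
  (hy : forall j, psiQ P (yQ A j) = q j *: yQ B (sigma j)) k :
  psiQ P (xQ k) = q k *: yQ B (sigma k) + (1/2) *: psiQ P (alphaQ A k).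
Proof. by rewrite {1}(xy A k) psiQD psiQZ hy. Qed.

Lemma yQ_self n (B : 'M[int]_n) t : yQ B t 0 t = 1.
Proof. by rewrite yQ_E eqxx ltnn mulr0 subr0. Qed.
Lemma yQ_above n (B : 'M[int]_n) (s p : 'I_n) : (s < p)%N -> yQ B s 0 p = 0.
Proof.
move=> sp; rewrite yQ_E ltnNge ltnW //= mulr0 subr0.
by have -> : (p == s) = false by rewrite -(inj_eq val_inj) /= gtn_eqF.
Qed.
Lemma yQ_below n (B : 'M[int]_n) (s p : 'I_n) : (p < s)%N ->
  yQ B s 0 p = - (1/2) * (B p s)%:~R.
Proof.
move=> ps; rewrite yQ_E ps.
have -> : (p == s) = false by rewrite -(inj_eq val_inj) /= ltn_eqF.
by rewrite sub0r mulNr.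
Qed.

Lemma core n (A B P Q : 'M[int]_n) (hom : graded_hom A B P)
  (hPQ : P *m Q = 1%:M) (sigma : 'S_n) (q : 'I_n -> rat)
  (hq0 : forall j, q j != 0)
  (hy : forall j, psiQ P (yQ A j) = q j *: yQ B (sigma j))
  (j : 'I_n) (hj : q j = 1 / 2 \/ q j = - (1 / 2)) :
  exists (i : 'I_n) (c : int),
    [/\ (i < j)%N, c != 0, alphaQ A j = c%:~R *: yQ A i &
        (sigma j < sigma i)%N].
Proof.
set s := sigma j.
set U := psiQ P (xQ j).
set a := psiQ P (alphaQ A j).
have hUp p : U 0 p = q j * yQ B s 0 p + (1/2) * a 0 p.
  by rewrite /U (hyx hy) !mxE.
have has : a 0 s != 0.
  apply/negP => /eqP h0; apply: (half_not_int hj).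
  have := hUp s; rewrite yQ_self h0 mulr0 addr0 mulr1 => <-.
  by rewrite /U psiQ_xE intr_int.
have [t [st hat htop]] := top_index has.
have ham (m : 'I_n) : (m < t)%N -> a 0 m = - (1/2) * (B m t)%:~R * a 0 t.
  move=> mt; have := ringF hom j mt; cbv zeta; rewrite -/U -/a !hUp.
  set b := (B m t)%:~R : rat.
  have hw : b * (q j * yQ B s 0 t) ^+ 2 + 2 * (q j * yQ B s 0 t) * (q j * yQ B s 0 m) = 0.
    case: (ltngtP s t) st => // [lst|est] _.
      rewrite yQ_above //; ring.
    have et : t = s by apply: val_inj.
    by rewrite -et yQ_self yQ_below // -/b; field.
  move=> h.
  have h2 : a 0 t * (b * a 0 t + 2 * a 0 m) = 0.
    move: h hw; set yt := q j * yQ B s 0 t; set ym := q j * yQ B s 0 m.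
    set at' := a 0 t; set am := a 0 m => h hw.
    nra.
  move/eqP: h2; rewrite mulf_eq0 (negbTE hat) /= => /eqP h3.
  by apply/eqP; rewrite -subr_eq0; apply/eqP; rewrite -[RHS](mulr0 (1/2)) -h3; field.
have ha : a = a 0 t *: yQ B t.
  apply/matrixP => z p; rewrite (ord1 z) [RHS]mxE.
  case: (ltngtP p t) => [pt|tp|/val_inj ->].
  - by rewrite ham // yQ_below //; ring.
  - by rewrite htop // yQ_above // mulr0.
  - by rewrite yQ_self mulr1.
set i := ((sigma^-1)%g t).
have hsi : sigma i = t by rewrite /i permKV.
have hyi := hy i; rewrite hsi in hyi.
set c' := a 0 t / q i.
have hal : alphaQ A j = c' *: yQ A i.
  rewrite -(psiQK hPQ (alphaQ A j)) -(psiQK hPQ (c' *: yQ A i)).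
  by rewrite psiQZ hyi -/a ha scalerA /c' mulfVK.
have hc' : c' != 0 by rewrite /c' mulf_neq0 // invr_eq0.
have hi : alphaQ A j 0 i = (c' *: yQ A i) 0 i by rewrite hal.
rewrite [RHS]mxE yQ_self mulr1 alphaQ_E in hi.
move: hi; case: ifP => ij hi; last by rewrite -hi eqxx in hc'.
exists i, (A i j); split => //.
- by move: hc'; rewrite -hi intr_eq0.
- by rewrite hal hi.
rewrite hsi /s ltn_neqAle.
have -> : (sigma j != t).
  rewrite -hsi; apply/negP => /eqP /perm_inj eji.
  by rewrite eji ltnn in ij.
by [].
Qed.

Lemma odd_int_facts (c e0 e1 e2 : int) : ~~ (2 %| c)%Z ->
  e1 * e2 = 4 -> c * e1 = 4 * e0 -> e1 = 4 \/ e1 = -4.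
Proof.
move=> hc h1 h2.
have hm : (c %% 2)%Z = 1 by lia.
have hd := divz_eq c 2.
set k := (c %/ 2)%Z in hd.
have e2n : e2 != 0 by apply/eqP => e; rewrite e mulr0 in h1.
have b1 : (-4 <= e1)%R /\ (e1 <= 4)%R.
  have [he|he] : (1 <= e2)%R \/ (e2 <= -1)%R by lia.
    by split; nia.
  by split; nia.
case: b1 => b1 b2.
have : (e1 == -4) || (e1 == -3) || (e1 == -2) || (e1 == -1) || (e1 == 0) ||
   (e1 == 1) || (e1 == 2) || (e1 == 3) || (e1 == 4) by lia.
rewrite -!orbA; repeat (case/orP; [move/eqP=> ee; rewrite ee in h1 h2 *; try lia|]).
move/eqP=> ee; lia.
Qed.

Theorem lemma4p4 (n : nat) (A B P : 'M[int]_n)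
  (hA : strict_upper A) (hB : strict_upper B)
  (hpsi : graded_iso A B P)
  (sigma : 'S_n) (q : 'I_n -> rat)
  (hq0 : forall j, q j != 0)
  (hy : forall j, psiQ P (yQ A j) = q j *: yQ B (sigma j))
  (j : 'I_n) (hj : q j = 1 / 2 \/ q j = - (1 / 2)) :
  exists (i : 'I_n) (c : int),
    (i < j)%N /\ c != 0 /\ alphaQ A j = c%:~R *: yQ A i /\
    (~ even_exceptional A j -> ~~ (2 %| c)%Z /\ (q i = 2 \/ q i = -2)) /\
    (~ even_exceptional A j -> ~ even_exceptional B (sigma i) ->
       exists d : int, ~~ (2 %| d)%Z /\
         alphaQ B (sigma i) = d%:~R *: yQ B (sigma j)).
Proof.
case: hpsi => hom [Q [homQ [hPQ hQP]]].
have [i [c [ij c0 hal sji]]] := core hom hPQ hq0 hy hj.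
set s := sigma j; set t := sigma i.
have hcodd : ~ even_exceptional A j -> ~~ (2 %| c)%Z.
  move=> hne; apply/negP => hc; apply: hne; exists i, c; split => //.
have hyinv k : psiQ Q (yQ B k) = (q ((sigma^-1)%g k))^-1 *: yQ A ((sigma^-1)%g k).
  have := hy ((sigma^-1)%g k); rewrite permKV => h.
  rewrite -[yQ A _](psiQK hPQ) h psiQZ scalerA mulVf ?scale1r //.
have ha : psiQ P (alphaQ A j) = (c%:~R * q i) *: yQ B t.
  by rewrite hal psiQZ hy scalerA.
have hUt : (P j t)%:~R = (c%:~R * q i) / 2 :> rat.
  have e : psiQ P (xQ j) 0 t = (q j *: yQ B s + (1/2) *: psiQ P (alphaQ A j)) 0 t.
    by rewrite -(hyx hy j).
  have tsF : (t == s) = false by rewrite -(inj_eq val_inj) /= gtn_eqF.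
  rewrite ha psiQ_xE !mxE eqxx tsF !alphaQ_E ltnn ltnNge (ltnW sji) /= in e.
  by rewrite e eqxx /=; field.
have iinv : (sigma^-1)%g t = i by rewrite /t permK.
have [z1 hz1] := intrP (psiQ_aint P A i t).
have [z2 hz2] := intrP (psiQ_aint Q B t i).
have he1 : 2 * q i = (2 * P i t - z1)%:~R.
  have e : psiQ P (xQ i) 0 t = (q i *: yQ B t + (1/2) *: psiQ P (alphaQ A i)) 0 t.
    by rewrite -(hyx hy i).
  rewrite psiQ_xE [RHS]mxE [X in _ = X + _]mxE [X in _ = _ + X]mxE yQ_self hz1 in e.
  by rewrite intrB intrM e; field.
have he2 : 2 * (q i)^-1 = (2 * Q t i - z2)%:~R.
  have e : psiQ Q (xQ t) 0 i = ((q ((sigma^-1)%g t))^-1 *: yQ A ((sigma^-1)%g t) + (1/2) *: psiQ Q (alphaQ B t)) 0 i.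
    by rewrite -(hyx hyinv t).
  rewrite iinv psiQ_xE [RHS]mxE [X in _ = X + _]mxE [X in _ = _ + X]mxE yQ_self hz2 in e.
  by rewrite intrB intrM e; field.
have qi0 := hq0 i.
have part2 : ~ even_exceptional A j -> q i = 2 \/ q i = -2.
  move=> hne.
  have h1 : (2 * P i t - z1) * (2 * Q t i - z2) = 4.
    apply: (@intr_inj rat); rewrite intrM -he1 -he2.
    have -> : (4%:~R : rat) = 4 by [].
    by field.
  have h2 : c * (2 * P i t - z1) = 4 * P j t.
    apply: (@intr_inj rat); rewrite !intrM -he1 hUt.
    have -> : (4%:~R : rat) = 4 by [].
    by field.
  case: (odd_int_facts (hcodd hne) h1 h2) => h; [left|right].
    have : 2 * q i = 4 by rewrite he1 h.
    move=> e; apply: (@mulfI _ 2) => //; rewrite e; ring.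
  have : 2 * q i = -4 by rewrite he1 h.
  move=> e; apply: (@mulfI _ 2) => //; rewrite e; ring.
exists i, c; split => //; split => //; split => //; split.
  by move=> hne; split; [exact: hcodd | exact: part2].
move=> hne hneB.
have hqi := part2 hne.
have hq0' k : (q ((sigma^-1)%g k))^-1 != 0 by rewrite invr_eq0.
have hj' : (q ((sigma^-1)%g t))^-1 = 1/2 \/ (q ((sigma^-1)%g t))^-1 = -(1/2).
  by rewrite iinv; case: hqi => ->; [left|right]; field.
have [u [d [ut d0 hB' _]]] := core homQ hQP hq0' hyinv hj'.
have hdodd : ~~ (2 %| d)%Z.
  apply/negP => hd; apply: hneB; exists u, d; split => //.
exists d; split => //.
suff -> : s = u by [].
have hUv : psiQ P (xQ j) = q j *: yQ B s +
    (P j t)%:~R *: (xQ t - (1/2) *: (d%:~R *: yQ B u)).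
  rewrite (hyx hy j) ha scalerA hUt -hB'.
  have -> : 1/2 * (c%:~R * q i) = c%:~R * q i / 2 by field.
  by [].
have hUp p : (P j p)%:~R = q j * yQ B s 0 p +
    (P j t)%:~R * (xQ t 0 p - (1/2) * (d%:~R * yQ B u 0 p)).
  rewrite -psiQ_xE hUv mxE_add mxE_scale; congr (_ + _); by rewrite mxE_scale mxE_sub !mxE_scale.
have he0 : P j t = c \/ P j t = - c.
  by case: hqi => e; [left|right]; apply: (@intr_inj rat); rewrite hUt e ?intrN; field.
case: (ltngtP s u) => [su|us|/val_inj //].
  have := hUp u; rewrite yQ_above // yQ_self xQ_E.
  have -> : (u == t) = false by rewrite -(inj_eq val_inj) /= ltn_eqF.
  move=> e.
  have : (2 * P j u = - (P j t * d))%R.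
    by apply: (@intr_inj rat); rewrite intrM intrN intrM e /=; field.
  have hc := hcodd hne.
  have hc2 : (c %% 2 = 1)%Z by lia.
  have hd2 : (d %% 2 = 1)%Z by lia.
  have hc1 := divz_eq c 2; have hd1 := divz_eq d 2.
  rewrite hc2 in hc1; rewrite hd2 in hd1.
  move: (c %/ 2)%Z (d %/ 2)%Z hc1 hd1 => k l hc1 hd1.
  case: he0 => ->; rewrite hc1 hd1 => h; nia.
have := hUp s; rewrite yQ_self (yQ_above B us) xQ_E.
have -> : (s == t) = false by rewrite -(inj_eq val_inj) /= ltn_eqF.
move=> e; exfalso; apply: (half_not_int hj).
have -> : q j = (P j s)%:~R by rewrite e /=; field.
exact: intr_int.
Qed.
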